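(* Let $\alpha_a$ be a labeled dGL hybrid game. If $S$ is an inductive Angelic subvalue map for $\alpha_a$, then $S$ is an Angelic subvalue map for $\alpha_a$, i.e. $\models S(b)\rightarrow\langle\mathrm{suffix}_b(\alpha_a)\rangle S(\mathsf{end})$ for every $b\in\mathrm{nodes}(\alpha_a)$. Dually, if $S$ is an inductive Demonic subvalue map for $\alpha_a$, then $S$ is a Demonic subvalue map for $\alpha_a$, i.e. $\models S(b)\rightarrow[\mathrm{suffix}_b(\alpha_a)] S(\mathsf{end})$ for every $b\in\mathrm{nodes}(\alpha_a)$.
   Context: Differential game logic (dGL). Hybrid games are generated by $\alpha,\beta ::= x:=e \mid \alpha;\beta \mid ?Q \mid \{x'=f(x)\,\&\,Q\} \mid \alpha^{*} \mid \alpha\cup\beta \mid x:=* \mid\ !Q \mid \{x'=f(x)\,\&\,Q\}^{d} \mid \alpha^{\times} \mid \alpha\cap\beta \mid x:=\otimes$, with $x$ a real variable (vector for ODEs), $e,f(x)$ polynomial terms, $Q$ a formula. Players Angel and Demon: $x:=e$ deterministic assignment; in $x:=*$ Angel (in $x:=\otimes$ Demon) assigns any real to $x$; in $\{x'=f(x)\&Q\}$ Angel (in $\{x'=f(x)\&Q\}^d$ Demon) chooses a duration $r\ge 0$ of following the ODE with $Q$ true throughout; $?Q$ makes Angel lose and $!Q$ makes Demon lose if $Q$ is false; in $\alpha\cup\beta$ Angel (in $\alpha\cap\beta$ Demon) chooses the branch; in $\alpha^*$ Angel (in $\alpha^\times$ Demon) decides before each iteration whether to repeat or stop; $\alpha;\beta$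 is sequential composition. Formulas: polynomial (in)equalities closed under connectives, real quantifiers, and modalities $\langle\alpha\rangle\varphi$ (Angel has a winning strategy in $\alpha$ to reach $\varphi$ whatever Demon does) and $[\alpha]\varphi\equiv\neg\langle\alpha\rangle\neg\varphi$ (Demon has one), with the standard dGL winning-region semantics ($\langle x:=*\rangle\varphi\leftrightarrow\exists x\varphi$, $\langle x:=\otimes\rangle\varphi\leftrightarrow\forall x\varphi$, $\langle ?Q\rangle\varphi\leftrightarrow Q\wedge\varphi$, $\langle !Q\rangle\varphi\leftrightarrow(Q\rightarrow\varphi)$, $\langle\alpha\cup\beta\rangle\varphi\leftrightarrow\langle\alpha\rangle\varphi\vee\langle\beta\rangle\varphi$, $\langle\alpha\cap\beta\rangle\varphi\leftrightarrow\langle\alpha\rangle\varphi\wedge\langle\beta\rangle\varphi$, $\langle\alpha;\beta\rangle\varphi\leftrightarrow\langle\alpha\rangle\langle\beta\rangle\varphi$, Angel ODE: some duration/solution staying in $Q$ reaches $\varphi$, Demon ODE: all do; $\langle\alpha^*\rangle$ least fixed point, $\langle\alpha^\times\rangle$ greatest fixed point of the respective winning-region equations). $\models\psi$ means $\psi$ is valid. Labels. Every node of the syntax tree carries a unique label; $\alpha_a$ has root label $a$; $\mathrm{nodes}(\alpha_a)$ is the set of labels of its subgames (including $a$); a special label $\mathsf{end}\notin\mathrm{nodes}(\alpha_a)$. A map $S$ assigns formulas to a label set containing $\mathrm{nodes}(\alpha_a)\cup\{\mathsf{end}\}$; $S\{\mathsf{end}\mapsto Q\}$ replaces the value at $\mathsf{end}$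 by $Q$. $\gamma_g,\delta_d$ denote immediate subgames with root labels $g,d$. Game suffix: $\mathrm{suffix}_a(\alpha_a)=\alpha_a$; for $b\ne a$: for loops $((\gamma_g)^* )_a,((\gamma_g)^\times)_a$ it is $\mathrm{suffix}_b(\gamma_g);\alpha_a$; for $\cup,\cap$ the suffix in the branch containing $b$; for $(\gamma_g;\delta_d)_a$ it is $\mathrm{suffix}_b(\gamma_g);\delta_d$ if $b\in\mathrm{nodes}(\gamma_g)$, else $\mathrm{suffix}_b(\delta_d)$. Angelic (resp. Demonic) subvalue map: $\models S(b)\rightarrow\langle\mathrm{suffix}_b(\alpha_a)\rangle S(\mathsf{end})$ (resp. $\models S(b)\rightarrow[\mathrm{suffix}_b(\alpha_a)]S(\mathsf{end})$) for all $b\in\mathrm{nodes}(\alpha_a)$. Angelic existential projection $\mathcal{P}(\alpha_a,S)$: $(x:=* )_a\mapsto(x:=* )_a;?S(\mathsf{end})$; $\{x'=f(x)\&Q\}_a\mapsto\{x'=f(x)\&Q\}_a;?S(\mathsf{end})$; $(\gamma_g\cup\delta_d)_a\mapsto(?S(g);\mathcal{P}(\gamma_g,S))\cup(?S(d);\mathcal{P}(\delta_d,S))$; $((\gamma_g)^* )_a\mapsto(?S(g);\mathcal{P}(\gamma_g,S\{\mathsf{end}\mapsto S(a)\}))^*;?S(\mathsf{end})$; $(\gamma_g;\delta_d)_a\mapsto\mathcal{P}(\gamma_g,S\{\mathsf{end}\mapsto S(d)\});\mathcal{P}(\delta_d,S)$; $\cap\mapsto\mathcal{P}(\gamma_g,S)\cap\mathcal{P}(\delta_d,S)$;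 $((\gamma_g)^\times)_a\mapsto\mathcal{P}(\gamma_g,S\{\mathsf{end}\mapsto S(a)\})^\times$; $x:=e,x:=\otimes,?Q,!Q$, Demon ODE unchanged (labels preserved, new nodes fresh labels). Demonic existential projection $\mathcal{D}(\alpha_a,S)$: $(x:=\otimes)_a\mapsto(x:=\otimes)_a;!S(\mathsf{end})$; $(\{x'=f(x)\&Q\}^d)_a\mapsto(\{x'=f(x)\&Q\}^d)_a;!S(\mathsf{end})$; $(\gamma_g\cap\delta_d)_a\mapsto(!S(g);\mathcal{D}(\gamma_g,S))\cap(!S(d);\mathcal{D}(\delta_d,S))$; $((\gamma_g)^\times)_a\mapsto(!S(g);\mathcal{D}(\gamma_g,S\{\mathsf{end}\mapsto S(g)\vee S(\mathsf{end})\}))^\times;!S(\mathsf{end})$; $(\gamma_g;\delta_d)_a\mapsto\mathcal{D}(\gamma_g,S\{\mathsf{end}\mapsto S(d)\});\mathcal{D}(\delta_d,S)$; $(\gamma_g\cup\delta_d)_a\mapsto\mathcal{D}(\gamma_g,S)\cup\mathcal{D}(\delta_d,S)$; $((\gamma_g)^* )_a\mapsto\mathcal{D}(\gamma_g,S\{\mathsf{end}\mapsto S(a)\})^*$; $x:=e,x:=*,?Q,!Q$, Angel ODE unchanged (labels preserved, new nodes fresh labels). Inductive Angelic subvalue map ($S\Vdash\alpha_a$), recursively: atomic $\alpha$ (assignments of all three kinds, tests, both ODE kinds): $\models S(a)\rightarrow\langle\alpha\rangle S(\mathsf{end})$; $(\gamma_g\cup\delta_d)_a$: $\models S(a)\rightarrow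 S(g)\vee S(d)$, $S\Vdash\gamma_g$, $S\Vdash\delta_d$; $(\gamma_g\cap\delta_d)_a$: $\models S(a)\rightarrow S(g)\wedge S(d)$ and both; $(\gamma_g;\delta_d)_a$: $\models S(a)\rightarrow S(g)$, $S\{\mathsf{end}\mapsto S(d)\}\Vdash\gamma_g$, $S\Vdash\delta_d$; $((\gamma_g)^* )_a$: $\models S(a)\rightarrow\langle\mathcal{P}(\alpha_a,S)\rangle S(\mathsf{end})$ and $S\{\mathsf{end}\mapsto S(a)\}\Vdash\gamma_g$; $((\gamma_g)^\times)_a$: $\models S(a)\rightarrow S(g)\wedge S(\mathsf{end})$ and $S\{\mathsf{end}\mapsto S(a)\}\Vdash\gamma_g$. Inductive Demonic subvalue map, recursively: atomic: $\models S(a)\rightarrow[\alpha]S(\mathsf{end})$; $\cup$: $\models S(a)\rightarrow S(g)\wedge S(d)$ and recursively for both; $\cap$: $\models S(a)\rightarrow S(g)\vee S(d)$ and both; $;$: $\models S(a)\rightarrow S(g)$, $S\{\mathsf{end}\mapsto S(d)\}$ for $\gamma_g$, $S$ for $\delta_d$; $((\gamma_g)^* )_a$: $\models S(a)\rightarrow S(\mathsf{end})\wedge S(g)$ and $S\{\mathsf{end}\mapsto S(a)\}$ for $\gamma_g$; $((\gamma_g)^\times)_a$: $\models S(a)\rightarrow[\mathcal{D}(\alpha_a,S)]S(\mathsf{end})$ and $S\{\mathsf{end}\mapsto S(a)\}$ for $\gamma_g$. *)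

(* Defs.v *)
From Stdlib Require Import Reals QArith Qreals List.
Import ListNotations.
Open Scope R_scope.

Definition var := nat.
Definition label := nat.

Inductive term : Type :=
| TVar (x : var)
| TConst (q : Q)
| TNeg (e : term)
| TPlus (e1 e2 : term)
| TTimes (e1 e2 : term).

Inductive game : Type :=
| GAsgn (a : label) (x : var) (e : term)
| GAny (a : label) (x : var)
| GAnyD (a : label) (x : var)
| GTest (a : label) (Q : fml)
| GTestD (a : label) (Q : fml)
| GOde (a : label) (sys : list (var * term)) (Q : fml)
| GOdeD (a : label) (sys : list (var * term)) (Q : fml)
| GChoice (a : label) (g d : game)
| GDChoice (a : label) (g d : game)
| GSeq (a : label) (g d : game)
| GStar (a : label) (g : game)
| GCross (a : label) (g : game)
with fml : Type :=
| FTrue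
| FFalse
| FEq (e1 e2 : term)
| FGe (e1 e2 : term)
| FGt (e1 e2 : term)
| FNot (p : fml)
| FAnd (p q : fml)
| FOr (p q : fml)
| FImp (p q : fml)
| FForall (x : var) (p : fml)
| FExists (x : var) (p : fml)
| FDia (g : game) (p : fml).

Definition FBox (g : game) (p : fml) : fml := FNot (FDia g (FNot p)).

Definition state := var -> R.

Definition upd (w : state) (x : var) (v : R) : state :=
  fun y => if Nat.eqb y x then v else w y.

Fixpoint eval (e : term) (w : state) : R :=
  match e with
  | TVar x => w x
  | TConst q => Q2R q
  | TNeg e => - eval e w
  | TPlus e1 e2 => eval e1 w + eval e2 w
  | TTimes e1 e2 => eval e1 w * eval e2 w
  end.

Definition is_sol (w : state) (sys : list (var * term)) (Q : state -> Prop)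
    (r : R) (phi : R -> state) : Prop :=
  phi 0 = w /\
  (forall t, 0 <= t <= r ->
     (forall xe, In xe sys ->
        derivable_pt_lim (fun s => phi s (fst xe)) t (eval (snd xe) (phi t))) /\
     (forall y, ~ In y (map fst sys) -> phi t y = w y) /\
     Q (phi t)).

(** [fsem p w]: formula p is true in state w.
    [gsem g X w]: Angel has a winning strategy in game g from w to reach X
    (winning-region semantics; * is a least, x a greatest fixed point). *)
Fixpoint fsem (p : fml) (w : state) {struct p} : Prop :=
  match p with
  | FTrue => True
  | FFalse => False
  | FEq e1 e2 => eval e1 w = eval e2 w
  | FGe e1 e2 => eval e1 w >= eval e2 w
  | FGt e1 e2 => eval e1 w > eval e2 w
  | FNot p => ~ fsem p w
  | FAnd p q => fsem p w /\ fsem q w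
  | FOr p q => fsem p w \/ fsem q w
  | FImp p q => fsem p w -> fsem q w
  | FForall x p => forall v, fsem p (upd w x v)
  | FExists x p => exists v, fsem p (upd w x v)
  | FDia g p => gsem g (fsem p) w
  end
with gsem (g : game) (X : state -> Prop) (w : state) {struct g} : Prop :=
  match g with
  | GAsgn _ x e => X (upd w x (eval e w))
  | GAny _ x => exists v, X (upd w x v)
  | GAnyD _ x => forall v, X (upd w x v)
  | GTest _ Q => fsem Q w /\ X w
  | GTestD _ Q => fsem Q w -> X w
  | GOde _ sys Q =>
      exists r phi, 0 <= r /\ is_sol w sys (fsem Q) r phi /\ X (phi r)
  | GOdeD _ sys Q =>
      forall r phi, 0 <= r -> is_sol w sys (fsem Q) r phi -> X (phi r)
  | GChoice _ g1 g2 => gsem g1 X w \/ gsem g2 X w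
  | GDChoice _ g1 g2 => gsem g1 X w /\ gsem g2 X w
  | GSeq _ g1 g2 => gsem g1 (gsem g2 X) w
  | GStar _ g1 =>
      (* least fixed point of Z = X u <g1>Z *)
      forall Z : state -> Prop,
        (forall u, X u \/ gsem g1 Z u -> Z u) -> Z w
  | GCross _ g1 =>
      (* greatest fixed point of Z = X n <g1>Z *)
      exists Z : state -> Prop,
        Z w /\ (forall u, Z u -> X u /\ gsem g1 Z u)
  end.

Definition valid (p : fml) : Prop := forall w, fsem p w.

Definition lbl (g : game) : label :=
  match g with
  | GAsgn a _ _ | GAny a _ | GAnyD a _ | GTest a _ | GTestD a _
  | GOde a _ _ | GOdeD a _ _ | GChoice a _ _ | GDChoice a _ _
  | GSeq a _ _ | GStar a _ | GCross a _ => a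
  end.

Fixpoint nodes (g : game) : list label :=
  match g with
  | GChoice a g1 g2 | GDChoice a g1 g2 | GSeq a g1 g2 => a :: nodes g1 ++ nodes g2
  | GStar a g1 | GCross a g1 => a :: nodes g1
  | _ => [lbl g]
  end.

Definition inb (b : label) (l : list label) : bool := existsb (Nat.eqb b) l.

(** suffix_b(g). New sequence nodes are given the label of the loop node
    (labels carry no semantic meaning). For b not in nodes(g) the result is
    irrelevant (we return g). *)
Fixpoint suffix (b : label) (g : game) : game :=
  if Nat.eqb b (lbl g) then g else
  match g with
  | GStar a g1 | GCross a g1 => GSeq a (suffix b g1) g
  | GChoice _ g1 g2 | GDChoice _ g1 g2 =>
      if inb b (nodes g1) then suffix b g1 else suffix b g2
  | GSeq a g1 g2 =>
      if inb b (nodes g1) then GSeq a (suffix b g1) g2 else suffix b g2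
  | _ => g
  end.

Inductive lab : Type := Lbl (n : label) | End.

Definition smap := lab -> fml.

Definition set_end (S : smap) (Q : fml) : smap :=
  fun l => match l with End => Q | Lbl n => S (Lbl n) end.

Definition ang_subval (S : smap) (g : game) : Prop :=
  forall b, In b (nodes g) ->
    valid (FImp (S (Lbl b)) (FDia (suffix b g) (S End))).

Definition dem_subval (S : smap) (g : game) : Prop :=
  forall b, In b (nodes g) ->
    valid (FImp (S (Lbl b)) (FBox (suffix b g) (S End))).

Fixpoint angproj (g : game) (S : smap) : game :=
  match g with
  | GAny a x => GSeq a (GAny a x) (GTest a (S End))
  | GOde a sys Q => GSeq a (GOde a sys Q) (GTest a (S End))
  | GChoice a g1 g2 =>
      GChoice a (GSeq a (GTest a (S (Lbl (lbl g1)))) (angproj g1 S))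
                (GSeq a (GTest a (S (Lbl (lbl g2)))) (angproj g2 S))
  | GStar a g1 =>
      GSeq a (GStar a (GSeq a (GTest a (S (Lbl (lbl g1))))
                              (angproj g1 (set_end S (S (Lbl a))))))
             (GTest a (S End))
  | GSeq a g1 g2 =>
      GSeq a (angproj g1 (set_end S (S (Lbl (lbl g2))))) (angproj g2 S)
  | GDChoice a g1 g2 => GDChoice a (angproj g1 S) (angproj g2 S)
  | GCross a g1 => GCross a (angproj g1 (set_end S (S (Lbl a))))
  | _ => g
  end.

Fixpoint demproj (g : game) (S : smap) : game :=
  match g with
  | GAnyD a x => GSeq a (GAnyD a x) (GTestD a (S End))
  | GOdeD a sys Q => GSeq a (GOdeD a sys Q) (GTestD a (S End))
  | GDChoice a g1 g2 =>
      GDChoice a (GSeq a (GTestD a (S (Lbl (lbl g1)))) (demproj g1 S))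
                 (GSeq a (GTestD a (S (Lbl (lbl g2)))) (demproj g2 S))
  | GCross a g1 =>
      GSeq a (GCross a (GSeq a (GTestD a (S (Lbl (lbl g1))))
                   (demproj g1 (set_end S (FOr (S (Lbl (lbl g1))) (S End))))))
             (GTestD a (S End))
  | GSeq a g1 g2 =>
      GSeq a (demproj g1 (set_end S (S (Lbl (lbl g2))))) (demproj g2 S)
  | GChoice a g1 g2 => GChoice a (demproj g1 S) (demproj g2 S)
  | GStar a g1 => GStar a (demproj g1 (set_end S (S (Lbl a))))
  | _ => g
  end.

Fixpoint ind_ang (S : smap) (g : game) : Prop :=
  match g with
  | GChoice a g1 g2 =>
      valid (FImp (S (Lbl a)) (FOr (S (Lbl (lbl g1))) (S (Lbl (lbl g2))))) /\
      ind_ang S g1 /\ ind_ang S g2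
  | GDChoice a g1 g2 =>
      valid (FImp (S (Lbl a)) (FAnd (S (Lbl (lbl g1))) (S (Lbl (lbl g2))))) /\
      ind_ang S g1 /\ ind_ang S g2
  | GSeq a g1 g2 =>
      valid (FImp (S (Lbl a)) (S (Lbl (lbl g1)))) /\
      ind_ang (set_end S (S (Lbl (lbl g2)))) g1 /\ ind_ang S g2
  | GStar a g1 =>
      valid (FImp (S (Lbl a)) (FDia (angproj g S) (S End))) /\
      ind_ang (set_end S (S (Lbl a))) g1
  | GCross a g1 =>
      valid (FImp (S (Lbl a)) (FAnd (S (Lbl (lbl g1))) (S End))) /\
      ind_ang (set_end S (S (Lbl a))) g1
  | _ =>
      valid (FImp (S (Lbl (lbl g))) (FDia g (S End)))
  end.

Fixpoint ind_dem (S : smap) (g : game) : Prop :=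
  match g with
  | GChoice a g1 g2 =>
      valid (FImp (S (Lbl a)) (FAnd (S (Lbl (lbl g1))) (S (Lbl (lbl g2))))) /\
      ind_dem S g1 /\ ind_dem S g2
  | GDChoice a g1 g2 =>
      valid (FImp (S (Lbl a)) (FOr (S (Lbl (lbl g1))) (S (Lbl (lbl g2))))) /\
      ind_dem S g1 /\ ind_dem S g2
  | GSeq a g1 g2 =>
      valid (FImp (S (Lbl a)) (S (Lbl (lbl g1)))) /\
      ind_dem (set_end S (S (Lbl (lbl g2)))) g1 /\ ind_dem S g2
  | GStar a g1 =>
      valid (FImp (S (Lbl a)) (FAnd (S End) (S (Lbl (lbl g1))))) /\
      ind_dem (set_end S (S (Lbl a))) g1
  | GCross a g1 =>
      valid (FImp (S (Lbl a)) (FBox (demproj g S) (S End))) /\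
      ind_dem (set_end S (S (Lbl a))) g1
  | _ =>
      valid (FImp (S (Lbl (lbl g))) (FBox g (S End)))
  end.

(* Main.v *)
Require Import Defs.
From Stdlib Require Import Reals QArith Qreals List Arith.

Lemma lbl_in (g : game) : In (lbl g) (nodes g).
Proof. destruct g; simpl; auto. Qed.

Lemma suffix_lbl (g : game) : suffix (lbl g) g = g.
Proof. destruct g; simpl; rewrite Nat.eqb_refl; reflexivity. Qed.

Lemma inb_In b l : inb b l = true <-> In b l.
Proof.
  unfold inb. rewrite existsb_exists. split.
  - intros [x [Hx Hb]]. apply Nat.eqb_eq in Hb. subst. exact Hx.
  - intros H. exists b. split; [exact H| apply Nat.eqb_refl].
Qed.

Lemma inb_false b l : inb b l = false -> ~ In b l.
Proof. intros H Hi. apply inb_In in Hi. congruence. Qed.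

Lemma mono (g : game) : forall (X Y : state -> Prop) w,
  (forall u, X u -> Y u) -> gsem g X w -> gsem g Y w.
Proof.
  induction g; intros X Y w HXY H; simpl in *.
  - auto.
  - destruct H as [v Hv]; eauto.
  - intros v; auto.
  - destruct H; auto.
  - auto.
  - destruct H as [r [phi [H1 [H2 H3]]]]. exists r, phi. auto.
  - intros r phi H1 H2. eauto.
  - destruct H; [left; eapply IHg1 | right; eapply IHg2]; eauto.
  - destruct H; split; [eapply IHg1 | eapply IHg2]; eauto.
  - eapply IHg1; [|exact H]. intros u Hu. eapply IHg2; eauto.
  - intros Z HZ. apply H. intros u [Hu|Hu]; apply HZ; auto.
  - destruct H as [Z [HZ1 HZ2]]. exists Z. split; auto.
    intros u Hu. destruct (HZ2 u Hu); auto.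
Qed.

Lemma star_fold a g X u : gsem g (gsem (GStar a g) X) u -> gsem (GStar a g) X u.
Proof.
  intros H Z HZ. apply HZ. right. eapply mono; [|exact H].
  intros v Hv. apply Hv. exact HZ.
Qed.

Lemma angproj_sound (g : game) : forall S X w,
  gsem (angproj g S) X w -> gsem g X w.
Proof.
  induction g; intros S X w H; simpl in *.
  1: auto. 2,3,4,6: auto.
  - destruct H as [v [_ Hv]]; eauto.
  - destruct H as [r [phi [H1 [H2 [_ H3]]]]]. exists r, phi. auto.
  - destruct H as [[_ H]|[_ H]]; [left; eapply IHg1 | right; eapply IHg2]; eauto.
  - destruct H; split; [eapply IHg1 | eapply IHg2]; eauto.
  - apply IHg1 in H. eapply mono; [|exact H]. intros u Hu. eapply IHg2; eauto.
  -
    set (Z := gsem (GStar a g) X).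
    assert (HZ : forall u, fsem (S End) u /\ X u \/
        gsem (GSeq a (GTest a (S (Lbl (lbl g)))) (angproj g (set_end S (S (Lbl a))))) Z u
        -> Z u).
    { intros u [[_ Hu]|Hu].
      - intros Z' HZ'. apply HZ'. left. exact Hu.
      - simpl in Hu. destruct Hu as [_ Hu]. apply IHg in Hu. apply star_fold. exact Hu. }
    exact (H Z HZ).
  - destruct H as [Z [HZ1 HZ2]]. exists Z. split; auto.
    intros u Hu. destruct (HZ2 u Hu). split; auto. eapply IHg; eauto.
Qed.

Lemma demproj_sound (g : game) : forall S X w,
  gsem g X w -> gsem (demproj g S) X w.
Proof.
  induction g; intros S X w H; simpl in *.
  1,2,4,5,6: auto.
  - intros v _; auto.
  - intros r phi H1 H2 _. eauto.
  - destruct H; [left; eapply IHg1 | right; eapply IHg2]; eauto.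
  - destruct H; split; intros _; [eapply IHg1 | eapply IHg2]; eauto.
  - apply IHg1. eapply mono; [|exact H]. intros u Hu. eapply IHg2; eauto.
  - intros Z HZ. apply H. intros u [Hu|Hu]; apply HZ; [left; exact Hu|].
    right. apply IHg. exact Hu.
  - destruct H as [Z [HZ1 HZ2]]. exists Z. split; auto.
    intros u Hu. destruct (HZ2 u Hu). split; auto.
Qed.

Ltac atomic_case H Hb :=
  cbn [nodes] in Hb; destruct Hb as [<-|[]]; intros w HS;
  rewrite suffix_lbl; exact (H w HS).

Lemma ang_main (g : game) : forall S, ind_ang S g -> forall b, In b (nodes g) ->
  forall w, fsem (S (Lbl b)) w -> gsem (suffix b g) (fsem (S End)) w.
Proof.
  induction g; intros S H b Hb.
  1-7: atomic_case H Hb.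
  -
    simpl in H. destruct H as [H0 [H1 H2]].
    pose proof (IHg1 S H1 (lbl g1) (lbl_in g1)) as T1. rewrite suffix_lbl in T1.
    pose proof (IHg2 S H2 (lbl g2) (lbl_in g2)) as T2. rewrite suffix_lbl in T2.
    intros w HS. simpl. destruct (Nat.eqb b a) eqn:E.
    + apply Nat.eqb_eq in E; subst. simpl.
      destruct (H0 w HS); [left; auto | right; auto].
    + destruct Hb as [<-|Hb]; [rewrite Nat.eqb_refl in E; discriminate|].
      destruct (inb b (nodes g1)) eqn:E1.
      * apply inb_In in E1. eauto.
      * apply inb_false in E1. apply in_app_or in Hb. destruct Hb; [contradiction|]. eauto.
  -
    simpl in H. destruct H as [H0 [H1 H2]].
    pose proof (IHg1 S H1 (lbl g1) (lbl_in g1)) as T1. rewrite suffix_lbl in T1.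
    pose proof (IHg2 S H2 (lbl g2) (lbl_in g2)) as T2. rewrite suffix_lbl in T2.
    intros w HS. simpl. destruct (Nat.eqb b a) eqn:E.
    + apply Nat.eqb_eq in E; subst. simpl.
      destruct (H0 w HS); split; auto.
    + destruct Hb as [<-|Hb]; [rewrite Nat.eqb_refl in E; discriminate|].
      destruct (inb b (nodes g1)) eqn:E1.
      * apply inb_In in E1. eauto.
      * apply inb_false in E1. apply in_app_or in Hb. destruct Hb; [contradiction|]. eauto.
  -
    simpl in H. destruct H as [H0 [H1 H2]].
    pose proof (IHg1 _ H1) as T1.
    pose proof (IHg2 S H2 (lbl g2) (lbl_in g2)) as T2. rewrite suffix_lbl in T2.
    intros w HS. simpl. destruct (Nat.eqb b a) eqn:E.
    + apply Nat.eqb_eq in E; subst. simpl.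
      pose proof (T1 (lbl g1) (lbl_in g1) w (H0 w HS)) as T. rewrite suffix_lbl in T.
      eapply mono; [|exact T]. exact T2.
    + destruct Hb as [<-|Hb]; [rewrite Nat.eqb_refl in E; discriminate|].
      destruct (inb b (nodes g1)) eqn:E1.
      * apply inb_In in E1. simpl. eapply mono; [exact T2|]. exact (T1 b E1 w HS).
      * apply inb_false in E1. apply in_app_or in Hb. destruct Hb; [contradiction|]. eauto.
  -
    simpl in H. destruct H as [H0 H1].
    assert (Top : forall w, fsem (S (Lbl a)) w -> gsem (GStar a g) (fsem (S End)) w).
    { intros w HS. exact (angproj_sound (GStar a g) S _ w (H0 w HS)). }
    intros w HS. simpl. destruct (Nat.eqb b a) eqn:E.
    + apply Nat.eqb_eq in E; subst. apply Top. exact HS.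
    + destruct Hb as [<-|Hb]; [rewrite Nat.eqb_refl in E; discriminate|].
      simpl. eapply mono; [exact Top|]. exact (IHg _ H1 b Hb w HS).
  -
    simpl in H. destruct H as [H0 H1].
    assert (Top : forall w, fsem (S (Lbl a)) w -> gsem (GCross a g) (fsem (S End)) w).
    { intros w HS. exists (fsem (S (Lbl a))). split; [exact HS|].
      intros u Hu. destruct (H0 u Hu) as [Hg HE]. split; [exact HE|].
      pose proof (IHg _ H1 (lbl g) (lbl_in g) u Hg) as T. rewrite suffix_lbl in T. exact T. }
    intros w HS. simpl. destruct (Nat.eqb b a) eqn:E.
    + apply Nat.eqb_eq in E; subst. apply Top. exact HS.
    + destruct Hb as [<-|Hb]; [rewrite Nat.eqb_refl in E; discriminate|].
      simpl. eapply mono; [exact Top|]. exact (IHg _ H1 b Hb w HS).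
Qed.

Ltac atomic_case_d H Hb :=
  cbn [nodes] in Hb; destruct Hb as [<-|[]]; intros w HS;
  rewrite suffix_lbl; exact (H w HS).

Lemma dem_main (g : game) : forall S, ind_dem S g -> forall b, In b (nodes g) ->
  forall w, fsem (S (Lbl b)) w -> ~ gsem (suffix b g) (fsem (FNot (S End))) w.
Proof.
  induction g; intros S H b Hb.
  1-7: atomic_case_d H Hb.
  -
    simpl in H. destruct H as [H0 [H1 H2]].
    pose proof (IHg1 S H1 (lbl g1) (lbl_in g1)) as T1. rewrite suffix_lbl in T1.
    pose proof (IHg2 S H2 (lbl g2) (lbl_in g2)) as T2. rewrite suffix_lbl in T2.
    intros w HS. simpl. destruct (Nat.eqb b a) eqn:E.
    + apply Nat.eqb_eq in E; subst. simpl.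
      destruct (H0 w HS). intros [G|G]; [eapply T1|eapply T2]; eauto.
    + destruct Hb as [<-|Hb]; [rewrite Nat.eqb_refl in E; discriminate|].
      destruct (inb b (nodes g1)) eqn:E1.
      * apply inb_In in E1. eauto.
      * apply inb_false in E1. apply in_app_or in Hb. destruct Hb; [contradiction|]. eauto.
  -
    simpl in H. destruct H as [H0 [H1 H2]].
    pose proof (IHg1 S H1 (lbl g1) (lbl_in g1)) as T1. rewrite suffix_lbl in T1.
    pose proof (IHg2 S H2 (lbl g2) (lbl_in g2)) as T2. rewrite suffix_lbl in T2.
    intros w HS. simpl. destruct (Nat.eqb b a) eqn:E.
    + apply Nat.eqb_eq in E; subst. simpl.
      intros [G1 G2]. destruct (H0 w HS); [eapply T1|eapply T2]; eauto.
    + destruct Hb as [<-|Hb]; [rewrite Nat.eqb_refl in E; discriminate|].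
      destruct (inb b (nodes g1)) eqn:E1.
      * apply inb_In in E1. eauto.
      * apply inb_false in E1. apply in_app_or in Hb. destruct Hb; [contradiction|]. eauto.
  -
    simpl in H. destruct H as [H0 [H1 H2]].
    pose proof (IHg1 _ H1) as T1.
    pose proof (IHg2 S H2 (lbl g2) (lbl_in g2)) as T2. rewrite suffix_lbl in T2.
    assert (M : forall u, gsem g2 (fsem (FNot (S End))) u -> fsem (FNot (S (Lbl (lbl g2)))) u).
    { intros u Hu Hs. exact (T2 u Hs Hu). }
    intros w HS. simpl. destruct (Nat.eqb b a) eqn:E.
    + apply Nat.eqb_eq in E; subst. simpl.
      pose proof (T1 (lbl g1) (lbl_in g1) w (H0 w HS)) as T. rewrite suffix_lbl in T.
      intros G. apply T. eapply mono; [exact M|]. exact G.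
    + destruct Hb as [<-|Hb]; [rewrite Nat.eqb_refl in E; discriminate|].
      destruct (inb b (nodes g1)) eqn:E1.
      * apply inb_In in E1. simpl. intros G. apply (T1 b E1 w HS).
        eapply mono; [exact M|]. exact G.
      * apply inb_false in E1. apply in_app_or in Hb. destruct Hb; [contradiction|]. eauto.
  -
    simpl in H. destruct H as [H0 H1].
    assert (Top : forall w, fsem (S (Lbl a)) w -> ~ gsem (GStar a g) (fsem (FNot (S End))) w).
    { intros w HS G. simpl in G.
      refine (G (fun u => ~ fsem (S (Lbl a)) u) _ HS).
      intros u [Hu|Hu] Ha.
      - destruct (H0 u Ha). apply Hu. assumption.
      - destruct (H0 u Ha) as [_ Hg].
        pose proof (IHg _ H1 (lbl g) (lbl_in g) u Hg) as T. rewrite suffix_lbl in T.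
        apply T. exact Hu. }
    intros w HS. simpl. destruct (Nat.eqb b a) eqn:E.
    + apply Nat.eqb_eq in E; subst. apply Top. exact HS.
    + destruct Hb as [<-|Hb]; [rewrite Nat.eqb_refl in E; discriminate|].
      simpl. intros G. apply (IHg _ H1 b Hb w HS).
      eapply mono; [|exact G]. intros u Hu Ha. exact (Top u Ha Hu).
  -
    simpl in H. destruct H as [H0 H1].
    assert (Top : forall w, fsem (S (Lbl a)) w -> ~ gsem (GCross a g) (fsem (FNot (S End))) w).
    { intros w HS G. exact (H0 w HS (demproj_sound (GCross a g) S _ w G)). }
    intros w HS. simpl. destruct (Nat.eqb b a) eqn:E.
    + apply Nat.eqb_eq in E; subst. apply Top. exact HS.
    + destruct Hb as [<-|Hb]; [rewrite Nat.eqb_refl in E; discriminate|].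
      simpl. intros G. apply (IHg _ H1 b Hb w HS).
      eapply mono; [|exact G]. intros u Hu Ha. exact (Top u Ha Hu).
Qed.

Theorem mainTheorem3 (g : game) (Huniq : NoDup (nodes g)) :
  (forall S : smap, ind_ang S g -> ang_subval S g) /\
  (forall S : smap, ind_dem S g -> dem_subval S g).
Proof.
  split.
  - intros S H b Hb w HS. exact (ang_main g S H b Hb w HS).
  - intros S H b Hb w HS. exact (dem_main g S H b Hb w HS).
Qed.
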